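(* Fix $(\mathbf{x},t)$, a unit vector $\mathbf{n}\in\mathbb{R}^N$, a real number $V_{\mathbf{n}}$, constants $\nu>0$, $\lambda>0$, $\mathrm{k}>0$, and $\chi\in\{0,1\}$. Let $\widetilde\rho_0>0$, $\widetilde{\mathbf{u}}_0\in\mathbb{R}^N$, $\widetilde\phi_0$, $\widetilde\mu_0$, $\widetilde\theta_0$ be smooth functions of $\xi\in\mathbb{R}$ satisfying \[ \begin{aligned} &-\partial_\xi\widetilde\rho_0\,V_{\mathbf{n}}+\partial_\xi(\widetilde\rho_0\widetilde{\mathbf{u}}_0)\cdot\mathbf{n}=0,\\ &\partial_\xi\big((\nu+\lambda)\partial_\xi\widetilde{\mathbf{u}}_0\cdot\mathbf{n}\big)\mathbf{n}+\partial_\xi(\nu\partial_\xi\widetilde{\mathbf{u}}_0)+\tfrac14\partial_\xi(\widetilde\phi_0^2-1)^2\,\mathbf{n}-\tfrac12\partial_\xi|\partial_\xi\widetilde\phi_0|^2\,\mathbf{n}=0,\\ &\chi\,\widetilde\rho_0\,\partial_\xi\widetilde\phi_0\,(V_{\mathbf{n}}-\widetilde{\mathbf{u}}_0\cdot\mathbf{n})=\widetilde\mu_0,\\ &\widetilde\rho_0\widetilde\mu_0=-\partial_{\xi\xi}\widetilde\phi_0+\widetilde\phi_0^3-\widetilde\phi_0,\\ &\mathrm{k}\,\partial_{\xi\xi}\widetilde\theta_0+\nu|\partial_\xi\widetilde{\mathbf{u}}_0|^2+(\nu+\lambda)|\partial_\xi\widetilde{\mathbf{u}}_0\cdot\mathbf{n}|^2+\chi\,\widetilde\mu_0^2=0,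 \end{aligned} \] with $\widetilde\rho_0(\pm\infty)=\rho_0^\pm>0$, $\widetilde{\mathbf{u}}_0(\pm\infty)=\mathbf{u}_0^\pm$, $\widetilde\phi_0(\pm\infty)=\pm1$, and $\widetilde\phi_0(0)=0$. Then \[ \widetilde\rho_0(\xi)\big(V_{\mathbf{n}}-\widetilde{\mathbf{u}}_0(\xi)\cdot\mathbf{n}\big)=\rho_0^\pm\big(V_{\mathbf{n}}-\mathbf{u}_0^\pm\cdot\mathbf{n}\big)\ \text{for all }\xi,\qquad \widetilde\phi_0(\xi)=\tanh\Big(\frac{\xi}{\sqrt2}\Big),\qquad \partial_\xi\widetilde{\mathbf{u}}_0\equiv0,\quad \partial_\xi\widetilde\theta_0\equiv0, \] and moreover $V_{\mathbf{n}}-\widetilde{\mathbf{u}}_0\cdot\mathbf{n}\equiv0$ if $\chi=1$, while $\partial_\xi\widetilde\rho_0\,(V_{\mathbf{n}}-\widetilde{\mathbf{u}}_0\cdot\mathbf{n})\equiv0$ if $\chi=0$.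
   Context: This is the zeroth-order inner problem of a matched asymptotic expansion near the interface $\{\phi=0\}$ of a compressible Navier–Stokes/Allen–Cahn system, written in the stretched normal variable $\xi=d/\epsilon$ ($d$ the signed distance to the interface). The case $\chi=1$ corresponds to mobility $M_\epsilon=1$ and $\chi=0$ to $M_\epsilon=1/\epsilon$. As part of the matching with the outer expansion, the $\xi$-derivatives of $\widetilde\rho_0,\widetilde{\mathbf{u}}_0,\widetilde\phi_0,\widetilde\theta_0$ tend to $0$ as $\xi\to\pm\infty$. *)

(* Defs.v *)
From HB Require Import structures.
From mathcomp Require Import all_boot all_order all_algebra.
From mathcomp Require Import all_classical all_reals all_analysis.
Set Implicit Arguments. Unset Strict Implicit. Unset Printing Implicit Defensive.
Import Order.TTheory GRing.Theory Num.Theory.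
Import numFieldNormedType.Exports.
Local Open Scope ring_scope.

Definition dotv (R : realType) (N : nat) (a b : 'rV[R]_N) : R :=
  \sum_(i < N) a ord0 i * b ord0 i.

Definition normsq (R : realType) (N : nat) (a : 'rV[R]_N) : R := dotv a a.

Definition smooth (R : realType) (V : normedModType R) (f : R -> V) : Prop :=
  forall (k : nat) (x : R), derivable (derive1n k f) x 1.

Definition tanh (R : realType) (x : R) : R :=
  (expR x - expR (- x)) / (expR x + expR (- x)).

(* Main.v *)
Require Import Defs.
From HB Require Import structures.
From mathcomp Require Import all_boot all_order all_algebra.
From mathcomp Require Import all_classical all_reals all_analysis.
From mathcomp Require Import lra ring.
Import Order.TTheory GRing.Theory Num.Theory.
Import numFieldNormedType.Exports.
Local Open Scope classical_set_scope.
Local Open Scope ring_scope.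

Section H.
Set Implicit Arguments.
Variable R : realType.
Implicit Types (f g : R -> R) (x df dg : R).


Lemma isdM f g x df dg : is_derive x 1 f df -> is_derive x 1 g dg ->
  is_derive x 1 (fun y => f y * g y) (df * g x + f x * dg).
Proof.
move=> Hf Hg; have := is_deriveM Hf Hg.
move=> H; apply: (is_derive_eq H); rewrite /GRing.scale /=; lra.
Qed.

Lemma isdD f g x df dg : is_derive x 1 f df -> is_derive x 1 g dg ->
  is_derive x 1 (fun y => f y + g y) (df + dg).
Proof. by move=> Hf Hg; apply: (is_derive_eq (is_deriveD Hf Hg)). Qed.

Lemma isdB f g x df dg : is_derive x 1 f df -> is_derive x 1 g dg ->
  is_derive x 1 (fun y => f y - g y) (df - dg).
Proof. by move=> Hf Hg; apply: (is_derive_eq (is_deriveB Hf Hg)). Qed.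

Lemma isdC (c x : R) : is_derive x 1 (fun _ : R => c) 0.
Proof. exact: is_derive_cst. Qed.

Lemma isdId (x : R) : is_derive x 1 (fun y : R => y) 1.
Proof. exact: is_derive_id. Qed.

Lemma isdX f n x df : is_derive x 1 f df ->
  is_derive x 1 (fun y => f y ^+ n) (n%:R * f x ^+ n.-1 * df).
Proof.
move=> Hf; have H := is_deriveX n Hf.
have -> : (fun y => f y ^+ n) = f ^+ n by apply/funext => y; rewrite exprfctE.
exact: H. Qed.

Lemma isdexp f x df : is_derive x 1 f df ->
  is_derive x 1 (fun y => expR (f y)) (expR (f x) * df).
Proof. by move=> Hf; apply: (is_derive_eq (is_derive1_comp (is_derive_expR (f x)) Hf)). Qed.

Lemma isdV f x df : f x != 0 -> is_derive x 1 f df ->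
  is_derive x 1 (fun y => (f y)^-1) (- (f x) ^- 2 * df).
Proof. by move=> H Hf; apply: (is_derive_eq (is_deriveV H Hf)). Qed.

Lemma isd1 f x : derivable f x 1 -> is_derive x 1 f (derive1 f x).
Proof. by move=> H; rewrite derive1E; apply: derivableP. Qed.

Lemma isd_val f x df : is_derive x 1 f df -> derive1 f x = df.
Proof. by move=> H; rewrite derive1E derive_val. Qed.

Lemma isd_dvb f x df : is_derive x 1 f df -> derivable f x 1.
Proof. by case. Qed.





Lemma contR f : (forall x, derivable f x 1) -> continuous f.
Proof. by move=> H x; apply/differentiable_continuous/derivable1_diffP. Qed.

Lemma nincrR f : (forall x, derivable f x 1) -> (forall x, derive1 f x <= 0) ->
  forall x y, x <= y -> f y <= f x.
Proof.
move=> H1 H2 x y xy.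
apply: (@ler0_derive1_nincr R f x y) => //; last first.
  exact/continuous_subspaceT/contR.
Qed.

Lemma cst_lim (F : set_system R) {FF : ProperFilter F} f c l :
  (forall x, f x = c) -> f x @[x --> F] --> l -> c = l.
Proof.
move=> H; have -> : f = fun _ => c by apply/funext.
move=> Hl; apply: (cvg_unique _ (cvg_cst c) Hl); exact: norm_hausdorff.
Qed.


Lemma nincr_zero f : (forall x, derivable f x 1) -> (forall x, derive1 f x <= 0) ->
  f x @[x --> +oo] --> (0:R) -> f x @[x --> -oo] --> (0:R) -> forall x, f x = 0.
Proof.
move=> H1 H2 Hp Hm x; apply/eqP; rewrite eq_le; apply/andP; split.
- have : \forall y \near -oo, f x <= f y.
    near=> y; apply: (nincrR H1 H2).
    near: y; apply: nbhs_ninfty_le; exact: num_real.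
  move=> Hev.
  exact: (cvgr_to_ge Hm Hev).
- have : \forall y \near +oo, f y <= f x.
    near=> y; apply: (nincrR H1 H2).
    near: y; apply: nbhs_pinfty_ge; exact: num_real.
  move=> Hev.
  exact: (cvgr_to_le Hp Hev).
Unshelve. all: end_near.
Qed.



Lemma gron_aux f (c : R) x0 x (d : R -> R) : (forall y : R, is_derive y 1 f (d y)) ->
  (forall y, 2 * f y * d y + c * f y ^+ 2 <= 0) -> f x0 = 0 -> x0 <= x -> f x = 0.
Proof.
move=> Hf Hd H0 xx0.
pose h := fun y => f y ^+ 2 * expR (c * y).
have Hh : forall y : R, is_derive y 1 h ((2%:R * f y ^+ 1 * d y) * expR (c * y) +
     f y ^+ 2 * (expR (c * y) * (0 * y + c * 1))).
  move=> y; exact: (isdM (isdX 2 (Hf y)) (isdexp (isdM (isdC c y) (isdId y)))).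
have hd : forall y : R, derivable h y 1 by move=> y; exact: isd_dvb (Hh y).
have hle : forall y : R, derive1 h y <= 0.
  move=> y; rewrite (isd_val (Hh y)).
  have e0 := expR_gt0 (c * y).
  have := Hd y; rewrite expr1 mul0r add0r mulr1 => Hy.
  have -> : 2%:R * f y * d y * expR (c * y) + f y ^+ 2 * (expR (c * y) * c)
     = expR (c * y) * (2 * f y * d y + c * f y ^+ 2) by ring.
  exact: mulr_ge0_le0 (ltW e0) Hy.
have := @nincrR h hd hle x0 x xx0.
rewrite /h H0 expr0n /= mul0r => hx.
have hx0 : 0 <= f x ^+ 2 * expR (c * x) by rewrite mulr_ge0 ?sqr_ge0 ?expR_ge0.
have : f x ^+ 2 * expR (c * x) = 0 by apply/eqP; rewrite eq_le hx hx0.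
move/eqP; rewrite mulf_eq0 => /orP[]; first by rewrite expf_eq0 /= => /eqP.
by rewrite gt_eqF ?expR_gt0.
Qed.

Lemma gronwall f (a : R -> R) (B x0 : R) : (forall x : R, is_derive x 1 f (a x * f x)) ->
  (forall x, `|a x| <= B) -> f x0 = 0 -> forall x, f x = 0.
Proof.
move=> Hf Ha H0 x.
have [xx0|x0x] := leP x0 x.
  apply: (@gron_aux f (- (2 * B)) x0 x _ Hf) => // y.
  have := Ha y; rewrite ler_norml => /andP[_ h].
  have := sqr_ge0 (f y); nra.
pose g := fun y => f (- y).
have Hg : forall y : R, is_derive y 1 g (- a (- y) * g y).
  move=> y; have := is_derive1_comp (Hf (- y)) (is_deriveNid y (1:R)).
  move=> H; apply: (is_derive_eq H); rewrite /g; ring.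
have := @gron_aux g (- (2 * B)) (- x0) (- x) _ Hg.
rewrite /g !opprK; apply => //; last by rewrite lerN2 ltW.
move=> y; have := Ha (- y); rewrite ler_norml => /andP[h _].
have := sqr_ge0 (f (- y)); nra.
Qed.


Lemma tanh_derive (y : R) : is_derive y 1 (@tanh R) (1 - tanh y ^+ 2).
Proof.
have hA := isdexp (isdId y).
have hB := isdexp (is_deriveNid y (1:R)).
have hN := isdB hA hB.
have hD := isdD hA hB.
have dpos : 0 < expR y + expR (- y) by rewrite addr_gt0 ?expR_gt0.
have dn0 : expR y + expR (- y) != 0 by rewrite gt_eqF.
have hV := @isdV (fun z => expR z + expR (- z)) y _ dn0 hD.
have hM := isdM hN hV.
have -> : @tanh R = (fun y => (expR y - expR (- y)) * (expR y + expR (- y))^-1).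
  by apply/funext => z; rewrite /tanh.
apply: (is_derive_eq hM); rewrite /tanh /=.
by field.
Qed.

Definition sq2 : R := Num.sqrt 2.

Lemma sq2_gt0 : 0 < sq2.
Proof. by rewrite /sq2 sqrtr_gt0. Qed.

Lemma sq2_sq : sq2 ^+ 2 = 2.
Proof. by rewrite /sq2 sqr_sqrtr. Qed.

Lemma T_derive (x : R) : is_derive x 1 (fun x => tanh (x / sq2))
   ((1 - tanh (x / sq2) ^+ 2) / sq2).
Proof.
have h1 := isdM (isdId x) (isdC (sq2^-1) x).
have := @is_derive1_comp _ (@tanh R) (fun z => z / sq2) x _ _ (tanh_derive _) h1.
move=> H; apply: (is_derive_eq H); rewrite /=; ring.
Qed.

Lemma tanh_le1 (y : R) : `|tanh y| <= 1.
Proof.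
rewrite /tanh normrM normfV.
have dpos : 0 < expR y + expR (- y) by rewrite addr_gt0 ?expR_gt0.
rewrite ler_pdivrMr; last by rewrite normr_gt0 gt_eqF.
rewrite mul1r (gtr0_norm dpos) ler_norml.
have := expR_gt0 y; have := expR_gt0 (- y).
move=> h1 h2; apply/andP; split; lra.
Qed.

Lemma tanh0 : tanh (0 : R) = 0.
Proof. by rewrite /tanh oppr0 subrr mul0r. Qed.

Lemma tanh_gt0 (y : R) : 0 < y -> 0 < tanh y.
Proof.
move=> y0; rewrite /tanh divr_gt0 //; last by rewrite addr_gt0 ?expR_gt0.
by rewrite subr_gt0 ltr_expR; lra.
Qed.

Lemma bounded_lim f (l1 l2 : R) : continuous f ->
  f x @[x --> +oo] --> l1 -> f x @[x --> -oo] --> l2 ->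
  exists B : R, forall x, `|f x| <= B.
Proof.
move=> fc Hp Hm.
have [M1 [_ HM1]] := (cvgrPdist_lt _ _).1 Hp 1 ltr01.
have [M2 [_ HM2]] := (cvgrPdist_lt _ _).1 Hm 1 ltr01.
pose a := Num.min M2 M1; pose b := Num.max M1 M2.
have ab : a <= b by rewrite /a /b ge_min le_max lexx orbT.
have cf : {within `[a, b], continuous f} by exact/continuous_subspaceT.
have cg : {within `[a, b], continuous (fun x => - f x)}.
  apply/continuous_subspaceT => x; apply: continuousN; exact: fc.
have [c1 _ Hc1] := EVT_max ab cf.
have [c2 _ Hc2] := EVT_max ab cg.
exists (Num.max (Num.max (f c1) (- f c2)) (Num.max (`|l1| + 1) (`|l2| + 1))) => x.
have [xb|bx] := leP x b; last first.
  have hx : M1 < x by apply: le_lt_trans bx; rewrite /b le_max lexx.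
  have := HM1 x hx => h.
  have : `|f x| <= `|l1| + 1.
    have := ler_distD l1 (f x) 0. rewrite !subr0 => H'. rewrite distrC in H'. lra.
  move=> h2; rewrite !le_max h2 !orbT //.
have [ax|xa] := leP a x; last first.
  have hx : x < M2 by apply: lt_le_trans xa _; rewrite /a ge_min lexx.
  have := HM2 x hx => h.
  have : `|f x| <= `|l2| + 1.
    have := ler_distD l2 (f x) 0. rewrite !subr0 => H'. rewrite distrC in H'. lra.
  move=> h2; rewrite !le_max h2 !orbT //.
have xin : x \in `[a, b] by rewrite in_itv /= ax xb.
have h1 := Hc1 x xin; have h2 := Hc2 x xin.
rewrite ler_norml; apply/andP; split.
  rewrite lerNl; apply: le_trans h2 _; rewrite !le_max lexx !orbT //.
apply: le_trans h1 _; rewrite !le_max lexx //.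
Qed.

Lemma E_lim (F : set_system R) {FF : Filter F} (p dp : R -> R) (l : R) :
  l ^+ 2 = 1 -> p x @[x --> F] --> l -> dp x @[x --> F] --> (0:R) ->
  (2^-1 * dp x ^+ 2 - 4^-1 * (p x ^+ 2 - 1) ^+ 2) @[x --> F] --> (0:R).
Proof.
move=> l2 Hp Hd.
have H : (2^-1 * dp x ^+ 2 - 4^-1 * (p x ^+ 2 - 1) ^+ 2) @[x --> F] -->
   (2^-1 * (0 * 0) - 4^-1 * ((l * l - 1) * (l * l - 1))).
  under eq_fun do rewrite !expr2.
  apply: cvgB; apply: cvgMl_tmp; first exact: cvgM.
  apply: cvgM; (apply: cvgB; [exact: cvgM | exact: cvg_cst]).
by move: H; rewrite -(expr2 l) l2 subrr !mul0r !mulr0 subrr.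
Qed.

End H.
Section V.
Set Implicit Arguments.
Variable R : realType.
Variable N : nat.

Lemma coordD (f : R -> 'rV[R]_N) x i : derivable f x 1 ->
  is_derive x 1 (fun y => f y ord0 i) (derive1 f x ord0 i).
Proof.
move=> H; have /derivable_mxP Hc := H.
apply: DeriveDef; first exact: Hc.
by rewrite derive1E (derive_mx H) mxE.
Qed.

Lemma dotD (f : R -> 'rV[R]_N) x (a : 'rV[R]_N) : derivable f x 1 ->
  is_derive x 1 (fun y => dotv (f y) a) (dotv (derive1 f x) a).
Proof.
move=> H; rewrite /dotv.
have := @is_derive_sum _ _ _ N (fun i y => f y ord0 i * a ord0 i) x 1
  (fun i => derive1 f x ord0 i * a ord0 i).
rewrite fct_sumE; apply => i.
have := is_deriveM (@coordD f x i H) (is_derive_cst (a ord0 i) x 1).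
move=> H2; apply: (is_derive_eq H2).
by rewrite /GRing.scale /= mulr0 add0r mulrC.
Qed.

Lemma cvg_bsum (T : Type) (F : set_system T) {FF : Filter F} m
   (g : 'I_m -> T -> R) (l : 'I_m -> R) :
  (forall i, g i x @[x --> F] --> l i) ->
  (\sum_(i < m) g i x) @[x --> F] --> \sum_(i < m) l i.
Proof.
elim: m g l => [|m IH] g l H.
  under eq_fun do rewrite big_ord0. rewrite big_ord0; exact: cvg_cst.
under eq_fun do rewrite big_ord_recr. rewrite big_ord_recr.
apply: cvgD; last exact: H.
exact: (IH (fun i => g (widen_ord (leqnSn m) i)) (fun i => l (widen_ord (leqnSn m) i))).
Qed.

Lemma coord_lim (T : Type) (F : set_system T) {FF : Filter F} (f : T -> 'rV[R]_N) (a : 'rV[R]_N) i :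
  f x @[x --> F] --> a -> f x ord0 i @[x --> F] --> a ord0 i.
Proof.
move=> H; exact: (continuous_cvg _ (@coord_continuous R 1 N ord0 i a) H).
Qed.

Lemma dot_lim (T : Type) (F : set_system T) {FF : Filter F} (f : T -> 'rV[R]_N) (a b : 'rV[R]_N) :
  f x @[x --> F] --> a -> dotv (f x) b @[x --> F] --> dotv a b.
Proof.
move=> H; rewrite /dotv; apply: cvg_bsum => i.
apply: cvgMr_tmp. exact: coord_lim.
Qed.


Lemma dot0 (a : 'rV[R]_N) : dotv 0 a = 0.
Proof. by rewrite /dotv big1 // => i _; rewrite mxE mul0r. Qed.

Lemma dotZD (r : R -> R) (f : R -> 'rV[R]_N) x (a : 'rV[R]_N) :
  derivable r x 1 -> derivable f x 1 ->
  dotv (derive1 (fun y => r y *: f y) x) a =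
  derive1 r x * dotv (f x) a + r x * dotv (derive1 f x) a.
Proof.
move=> Hr Hf.
have /derivable_mxP Hc := Hf.
have Hrf : derivable (fun y => r y *: f y) x 1.
  apply/derivable_mxP => i j.
  have -> : (fun y => (r y *: f y) i j) = (fun y => r y * f y i j).
    by apply/funext => y; rewrite mxE.
  exact: derivableM.
rewrite /dotv mulr_sumr mulr_sumr -big_split /=; apply: eq_bigr => i _.
have := isd_val (coordD i Hrf).
rewrite (_ : (fun y => (r y *: f y) ord0 i) = (fun y => r y * f y ord0 i)); last first.
  by apply/funext => y; rewrite mxE.
move=> <-.
rewrite (isd_val (isdM (isd1 Hr) (coordD i Hf))); ring.
Qed.

End V.
Arguments isdC {R}. Arguments isdId {R}. Arguments T_derive {R}. Arguments tanh_le1 {R}.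
Arguments dot0 {R N}. Arguments tanh0 {R}. Arguments tanh_gt0 {R}. Arguments sq2 {R}.
Arguments sq2_gt0 {R}. Arguments sq2_sq {R}. Arguments tanh_derive {R}.
Lemma eq0_from (R : realType) (a b : R) : a = b -> b = 0 -> a = 0.
Proof. by move=> -> ->. Qed.
Lemma ring_sq2 (R : realType) (A B C : R) : A = B + C * (sq2 ^+ 2 - 2) -> A = B.
Proof. by rewrite sq2_sq subrr mulr0 addr0. Qed.

Theorem lemma2p2 (R : realType) (N : nat) (n : 'rV[R]_N) (Vn nu lam k chi : R)
  (rho : R -> R) (u : R -> 'rV[R]_N) (phi mu theta : R -> R)
  (rhop rhom : R) (up um : 'rV[R]_N) :
  dotv n n = 1 ->
  0 < nu -> 0 < lam -> 0 < k -> (chi = 0 \/ chi = 1) ->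
  smooth rho -> smooth u -> smooth phi -> smooth mu -> smooth theta ->
  (forall xi, 0 < rho xi) ->
  (* the inner equations *)
  (forall xi, - derive1 rho xi * Vn + dotv (derive1 (fun x => rho x *: u x) xi) n = 0) ->
  (forall xi,
      (derive1 (fun x => (nu + lam) * dotv (derive1 u x) n) xi) *: n
    + derive1 (fun x => nu *: derive1 u x) xi
    + (4^-1 * derive1 (fun x => (phi x ^+ 2 - 1) ^+ 2) xi) *: n
    - (2^-1 * derive1 (fun x => (derive1 phi x) ^+ 2) xi) *: n = 0) ->
  (forall xi, chi * rho xi * derive1 phi xi * (Vn - dotv (u xi) n) = mu xi) ->
  (forall xi, rho xi * mu xi = - derive1n 2 phi xi + phi xi ^+ 3 - phi xi) ->
  (forall xi, k * derive1n 2 theta xi + nu * normsq (derive1 u xi)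
     + (nu + lam) * (dotv (derive1 u xi) n) ^+ 2 + chi * mu xi ^+ 2 = 0) ->
  (* far-field behaviour *)
  0 < rhop -> 0 < rhom ->
  rho x @[x --> +oo] --> rhop -> rho x @[x --> -oo] --> rhom ->
  u x @[x --> +oo] --> up -> u x @[x --> -oo] --> um ->
  phi x @[x --> +oo] --> (1 : R) -> phi x @[x --> -oo] --> (-1 : R) ->
  phi 0 = 0 ->
  (* matching: the xi-derivatives vanish at +-infinity *)
  derive1 rho x @[x --> +oo] --> (0 : R) -> derive1 rho x @[x --> -oo] --> (0 : R) ->
  derive1 u x @[x --> +oo] --> (0 : 'rV[R]_N) -> derive1 u x @[x --> -oo] --> (0 : 'rV[R]_N) ->
  derive1 phi x @[x --> +oo] --> (0 : R) -> derive1 phi x @[x --> -oo] --> (0 : R) ->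
  derive1 theta x @[x --> +oo] --> (0 : R) -> derive1 theta x @[x --> -oo] --> (0 : R) ->
  (forall xi, rho xi * (Vn - dotv (u xi) n) = rhop * (Vn - dotv up n)
           /\ rho xi * (Vn - dotv (u xi) n) = rhom * (Vn - dotv um n))
  /\ (forall xi, phi xi = tanh (xi / Num.sqrt 2))
  /\ (forall xi, derive1 u xi = 0)
  /\ (forall xi, derive1 theta xi = 0)
  /\ (chi = 1 -> forall xi, Vn - dotv (u xi) n = 0)
  /\ (chi = 0 -> forall xi, derive1 rho xi * (Vn - dotv (u xi) n) = 0).
Proof.
move=> nn nu0 lam0 k0 chi01 srho su sphi smu stheta rho0 Emass Emom Ephi Emu
  Etheta rhop0 rhom0 Lrp Lrm Lup Lum Lphp Lphm phi0 Ldrp Ldrm Ldup Ldum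
  Ldphp Ldphm Ldthp Ldthm.
have drho : forall x : R, derivable rho x 1 := fun x => srho 0%N x.
have du : forall x : R, derivable u x 1 := fun x => su 0%N x.
have ddu : forall x : R, derivable (derive1 u) x 1 := fun x => su 1%N x.
have dphi : forall x : R, derivable phi x 1 := fun x => sphi 0%N x.
have ddphi : forall x : R, derivable (derive1 phi) x 1 := fun x => sphi 1%N x.
have ddtheta : forall x : R, derivable (derive1 theta) x 1 := fun x => stheta 1%N x.
have Emu' : forall x, rho x * mu x = - derive1 (derive1 phi) x + phi x ^+ 3 - phi x
  := Emu.
pose w := fun x => Vn - dotv (u x) n.
have Hm : forall x : R, is_derive x 1 (fun y => rho y * w y)
    (derive1 rho x * w x - rho x * dotv (derive1 u x) n).
  move=> x; have H := isdM (isd1 (drho x)) (isdB (isdC Vn x) (dotD n (du x))).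
  by apply: (is_derive_eq H); rewrite /w; ring.
have Hmass : forall x, derive1 rho x * w x - rho x * dotv (derive1 u x) n = 0.
  move=> x; have := Emass x; rewrite dotZD // => E.
  rewrite /w -[RHS]oppr0 -E; ring.
pose M := rho 0 * w 0.
have Hmc : forall x, rho x * w x = M.
  move=> x; rewrite /M; apply: (@is_derive_0_is_cst _ (fun y => rho y * w y)) => y.
  by apply: (is_derive_eq (Hm y)); rewrite Hmass.
have Hmu : forall x, mu x = chi * M * derive1 phi x.
  by move=> x; rewrite -Ephi -(Hmc x) /w; ring.
pose E := fun y => 2^-1 * derive1 phi y ^+ 2 - 4^-1 * (phi y ^+ 2 - 1) ^+ 2.
have HE : forall x : R, is_derive x 1 E
    (derive1 phi x * (derive1 (derive1 phi) x - phi x ^+ 3 + phi x)).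
  move=> x.
  have H := isdB (isdM (isdC 2^-1 x) (isdX 2 (isd1 (ddphi x))))
     (isdM (isdC 4^-1 x) (isdX 2 (isdB (isdX 2 (isd1 (dphi x))) (isdC 1 x)))).
  by apply: (is_derive_eq H); rewrite /=; field.
have HE' : forall x, derive1 phi x * (derive1 (derive1 phi) x - phi x ^+ 3 + phi x)
    = - (chi * M) * rho x * derive1 phi x ^+ 2.
  move=> x; have e : derive1 (derive1 phi) x - phi x ^+ 3 + phi x = - (rho x * mu x).
    by rewrite Emu'; ring.
  by rewrite e Hmu; ring.
have LEp : E x @[x --> +oo] --> (0:R).
  exact: (E_lim phi (derive1 phi) (expr1n _ _) Lphp Ldphp).
have LEm : E x @[x --> -oo] --> (0:R).
  by apply: (E_lim phi (derive1 phi) _ Lphm Ldphm); rewrite sqrrN expr1n.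
pose F := fun y => chi * M * E y.
have HF : forall x : R, is_derive x 1 F (- ((chi * M) ^+ 2 * rho x * derive1 phi x ^+ 2)).
  move=> x; have H := isdM (isdC (chi * M) x) (HE x).
  by apply: (is_derive_eq H); rewrite HE'; ring.
have Fz : forall x, F x = 0.
  apply: nincr_zero.
  - by move=> x; exact: isd_dvb (HF x).
  - move=> x; rewrite (isd_val (HF x)) oppr_le0.
    by rewrite mulr_ge0 ?sqr_ge0 // mulr_ge0 ?sqr_ge0 // ltW.
  - have := cvgMl_tmp (a := chi * M) LEp; rewrite mulr0; apply; exact: _.
  - have := cvgMl_tmp (a := chi * M) LEm; rewrite mulr0; apply; exact: _.
have cMd : forall x, chi * M * derive1 phi x = 0.
  move=> x.
  have e1 : derive1 F x = 0.
    have -> : F = fun _ => 0 by apply/funext.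
    exact: derive1_cst.
  move: e1; rewrite (isd_val (HF x)) => /eqP; rewrite oppr_eq0.
  have -> : (chi * M) ^+ 2 * rho x * derive1 phi x ^+ 2
      = rho x * (chi * M * derive1 phi x) ^+ 2 by ring.
  rewrite mulf_eq0 gt_eqF ?rho0 //= sqrf_eq0.
  by move/eqP.
have mu0 : forall x, mu x = 0 by move=> x; rewrite Hmu cMd.
have E0 : forall x, E x = 0.
  move=> x.
  have Ec : forall y, E y = E 0.
    move=> y; apply: is_derive_0_is_cst => z.
    apply: (is_derive_eq (HE z)); rewrite HE'.
    rewrite (_ : - (chi * M) * rho z * derive1 phi z ^+ 2 =
       - (chi * M * derive1 phi z) * rho z * derive1 phi z); last by ring.
    by rewrite cMd; ring.
  rewrite Ec; exact: (cst_lim _ Ec LEp).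
have Hu' : forall x, derive1 u x = 0.
  pose G := fun (i : 'I_N) (y : R) => (nu + lam) * dotv (derive1 u y) n * n ord0 i
     + nu * derive1 u y ord0 i - E y * n ord0 i.
  have HG : forall i (x : R), is_derive x 1 (G i) 0.
    move=> i x.
    have h1 := isdM (isdM (isdC (nu + lam) x) (dotD n (ddu x))) (isdC (n ord0 i) x).
    have h2 := isdM (isdC nu x) (coordD i (ddu x)).
    have h3 := isdM (HE x) (isdC (n ord0 i) x).
    have H := isdB (isdD h1 h2) h3.
    apply: (is_derive_eq H).
    have Ei := congr1 (fun v : 'rV[R]_N => v ord0 i) (Emom x).
    move: Ei; rewrite /= !mxE.
    rewrite (isd_val (isdM (isdC (nu + lam) x) (dotD n (ddu x)))).
    rewrite (isd_val (isdX 2 (isdB (isdX 2 (isd1 (dphi x))) (isdC 1 x)))).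
    rewrite (isd_val (isdX 2 (isd1 (ddphi x)))).
    have eZ : derive1 (fun y => nu *: derive1 u y) x = nu *: derive1 (derive1 u) x.
      by rewrite !derive1E; exact: deriveZ.
    rewrite eZ mxE.
    by apply: eq0_from; field.
  have Gc : forall i x, G i x = 0.
    move=> i x.
    have Gc' : forall y, G i y = G i 0.
      by move=> y; apply: is_derive_0_is_cst (HG i).
    have LG : G i y @[y --> +oo] --> ((nu + lam) * dotv 0 n * n ord0 i
        + nu * (0 : 'rV[R]_N) ord0 i - 0 * n ord0 i).
      apply: cvgB; last exact: cvgMr_tmp.
      apply: cvgD; last by apply: cvgMl_tmp; exact: coord_lim.
      by apply: cvgMr_tmp; apply: cvgMl_tmp; exact: dot_lim.
    rewrite Gc' (cst_lim _ Gc' LG) dot0 mxE; ring.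
  move=> x.
  have sG : \sum_(i < N) G i x * n ord0 i =
      \sum_(i < N) (((nu + lam) * dotv (derive1 u x) n - E x) * (n ord0 i * n ord0 i)
                      + nu * (derive1 u x ord0 i * n ord0 i)).
    by apply: eq_bigr => i _; rewrite /G; ring.
  rewrite big_split /= -!mulr_sumr in sG.
  rewrite -[\sum_(i < N) n ord0 i * n ord0 i]/(dotv n n) in sG.
  rewrite -[\sum_(i < N) derive1 u x ord0 i * n ord0 i]/(dotv (derive1 u x) n) in sG.
  have d0 : dotv (derive1 u x) n = 0.
    move: sG; rewrite big1 => [|i _]; last by rewrite Gc mul0r.
    rewrite E0 subr0 nn mulr1 => /esym /eqP.
    rewrite -mulrDl mulf_eq0 => /orP[|/eqP //].
    by rewrite gt_eqF // !addr_gt0.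
  apply/rowP => i; rewrite mxE.
  have := Gc i x; rewrite /G d0 E0 mulr0 !mul0r add0r subr0 => /eqP.
  by rewrite mulf_eq0 gt_eqF //= => /eqP.
have Htheta : forall x, derive1 theta x = 0.
  have t2 : forall x, derive1 (derive1 theta) x = 0.
    move=> x.
    have Et : k * derive1 (derive1 theta) x + nu * normsq (derive1 u x)
     + (nu + lam) * (dotv (derive1 u x) n) ^+ 2 + chi * mu x ^+ 2 = 0 := Etheta x.
    move: Et; rewrite Hu' /normsq !dot0 mu0 expr0n /= !mulr0 !addr0 => /eqP.
    by rewrite mulf_eq0 gt_eqF //= => /eqP.
  have Tc : forall x, derive1 theta x = derive1 theta 0.
    move=> x; apply: is_derive_0_is_cst => z.
    by apply: (is_derive_eq (isd1 (ddtheta z))); rewrite t2.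
  by move=> x; rewrite Tc (cst_lim _ Tc Ldthp).
have Hphi : forall x, phi x = tanh (x / Num.sqrt 2) /\ derive1 phi 0 = sq2^-1.
  have pp : forall x, derive1 (derive1 phi) x = phi x ^+ 3 - phi x.
    move=> x; have := Emu' x; rewrite mu0 mulr0 => h.
    by lra.
  have [B hB] := bounded_lim (contR dphi) Lphp Lphm.
  have s0 : sq2 != 0 :> R by rewrite gt_eqF ?sq2_gt0.
  have sinv0 : 0 <= (sq2 : R)^-1 by rewrite invr_ge0 ltW ?sq2_gt0.
  have d0 : (derive1 phi 0 - sq2^-1) * (derive1 phi 0 + sq2^-1) = 0.
    have e : (derive1 phi 0 - sq2^-1) * (derive1 phi 0 + sq2^-1)
        = 2 * E 0 + (2^-1 - (sq2 ^+ 2)^-1).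
      by rewrite /E phi0; field.
    by rewrite e E0 sq2_sq mulr0 add0r subrr.
  have hbT : forall x, `|(phi x + tanh (x / sq2)) / sq2| <= (B + 1) / sq2.
    move=> x; rewrite normrM (ger0_norm sinv0); apply: ler_wpM2r => //.
    by apply: le_trans (ler_normD _ _) _; apply: lerD => //; exact: tanh_le1.
  have hbT' : forall x, `|(phi x - tanh (x / sq2)) / sq2| <= (B + 1) / sq2.
    move=> x; rewrite normrM (ger0_norm sinv0); apply: ler_wpM2r => //.
    by apply: le_trans (ler_normB _ _) _; apply: lerD => //; exact: tanh_le1.
  have hbP : forall x, `|2 / sq2 * phi x| <= 2 / sq2 * B.
    have s2 : 0 <= 2 / (sq2 : R) by rewrite divr_ge0 // ltW // sq2_gt0.
    by move=> x; rewrite normrM (ger0_norm s2); apply: ler_wpM2l.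
  have hbN : forall x, `|- (2 / sq2) * phi x| <= 2 / sq2 * B.
    by move=> x; rewrite mulNr normrN.
  move/eqP: d0; rewrite mulf_eq0 => /orP[/eqP h1|/eqP h2].
  - pose q := fun y => derive1 phi y - (1 - phi y ^+ 2) / sq2.
    have Hq : forall x : R, is_derive x 1 q ((2 / sq2 * phi x) * q x).
      move=> x.
      have H := isdB (isd1 (ddphi x))
        (isdM (isdB (isdC 1 x) (isdX 2 (isd1 (dphi x)))) (isdC (sq2^-1) x)).
      apply: (is_derive_eq H); rewrite pp /q /=.
      apply: (@ring_sq2 R _ _ (- (phi x * (1 - phi x ^+ 2)) / sq2 ^+ 2)).
      by field.
    have q0 : q 0 = 0 by rewrite /q phi0 expr2 mul0r subr0 div1r.
    have qz := gronwall (fun y => 2 / sq2 * phi y) (2 / sq2 * B) 0 Hq hbP q0.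
    have Hd : forall x, derive1 phi x = (1 - phi x ^+ 2) / sq2.
      by move=> x; apply/eqP; rewrite -subr_eq0; apply/eqP; exact: qz.
    pose D := fun y => phi y - tanh (y / sq2).
    have HD : forall x : R, is_derive x 1 D ((- (phi x + tanh (x / sq2)) / sq2) * D x).
      move=> x; have H := isdB (isd1 (dphi x)) (T_derive x).
      by apply: (is_derive_eq H); rewrite Hd /D; field.
    have hbD : forall x, `|- (phi x + tanh (x / sq2)) / sq2| <= (B + 1) / sq2.
      by move=> x; rewrite mulNr normrN.
    have D0 : D 0 = 0 by rewrite /D phi0 mul0r tanh0 subrr.
    have Dz := gronwall (fun y => - (phi y + tanh (y / sq2)) / sq2) ((B + 1) / sq2) 0 HD hbD D0.
    move=> x; split; last by apply/eqP; rewrite -subr_eq0 h1.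
    by apply/eqP; rewrite -subr_eq0; apply/eqP; exact: Dz.
  - exfalso.
    pose p := fun y => derive1 phi y + (1 - phi y ^+ 2) / sq2.
    have Hp : forall x : R, is_derive x 1 p ((- (2 / sq2) * phi x) * p x).
      move=> x.
      have H := isdD (isd1 (ddphi x))
        (isdM (isdB (isdC 1 x) (isdX 2 (isd1 (dphi x)))) (isdC (sq2^-1) x)).
      apply: (is_derive_eq H); rewrite pp /p /=.
      apply: (@ring_sq2 R _ _ (- (phi x * (1 - phi x ^+ 2)) / sq2 ^+ 2)).
      by field.
    have p0 : p 0 = 0 by rewrite /p phi0 expr2 mul0r subr0 div1r.
    have pz := gronwall (fun y => - (2 / sq2) * phi y) (2 / sq2 * B) 0 Hp hbN p0.
    have Hd : forall x, derive1 phi x = - ((1 - phi x ^+ 2) / sq2).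
      move=> x; apply/eqP; rewrite -subr_eq0 opprK; apply/eqP; exact: pz.
    pose D := fun y => phi y + tanh (y / sq2).
    have HD : forall x : R, is_derive x 1 D (((phi x - tanh (x / sq2)) / sq2) * D x).
      move=> x; have H := isdD (isd1 (dphi x)) (T_derive x).
      by apply: (is_derive_eq H); rewrite Hd /D; field.
    have D0 : D 0 = 0 by rewrite /D phi0 mul0r tanh0 addr0.
    have Dz := gronwall (fun y => (phi y - tanh (y / sq2)) / sq2) ((B + 1) / sq2) 0 HD hbT' D0.
    have [M1 [_ HM1]] := (cvgrPdist_lt _ _).1 Lphp 1 ltr01.
    pose x := Num.max M1 0 + 1.
    have xM : M1 < x by rewrite /x ltr_pwDr // le_max lexx.
    have x0 : 0 < x by rewrite /x ltr_pwDr // le_max lexx orbT.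
    have := HM1 x xM; rewrite ltr_norml => /andP[_ h].
    have := tanh_gt0 _ (divr_gt0 x0 sq2_gt0).
    have := Dz x; rewrite /D => e; lra.
split.
  have L1 : (rho x * w x) @[x --> +oo] --> rhop * (Vn - dotv up n).
    apply: cvgM => //; apply: cvgB; [exact: cvg_cst | exact: dot_lim].
  have L2 : (rho x * w x) @[x --> -oo] --> rhom * (Vn - dotv um n).
    apply: cvgM => //; apply: cvgB; [exact: cvg_cst | exact: dot_lim].
  move=> xi; split; rewrite -/(w xi) (Hmc xi).
    exact: (cst_lim (fun y => rho y * w y) Hmc L1).
  exact: (cst_lim (fun y => rho y * w y) Hmc L2).
split; first by move=> xi; case: (Hphi xi).
split; first exact: Hu'.
split; first exact: Htheta.
split.
  move=> c1 xi.
  have h0 := cMd 0; case: (Hphi 0) => _ d0; rewrite d0 c1 mul1r in h0.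
  have M0 : M = 0.
    move/eqP: h0; rewrite mulf_eq0 => /orP[/eqP //|].
    by rewrite invr_eq0 gt_eqF ?sq2_gt0.
  have := Hmc xi; rewrite M0 => /eqP; rewrite mulf_eq0 => /orP[|/eqP //].
  by rewrite gt_eqF ?rho0.
move=> _ xi; have := Hmass xi; rewrite Hu' dot0 mulr0 subr0; exact.
Qed.
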